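(* Let $\mathcal{P}$ be a finite poset and $L=\mathfrak{g}^{\prec}(\mathcal{P})$. Then (i) $b(L)\le |\{p\prec q : p\prec q\notin Rel_E(\mathcal{P})\}|-1$, and (ii) $b(L)\le |Rel_{\overline{C}}(\mathcal{P})|$.
   Context: All Lie algebras are over an algebraically closed field $\mathbf{k}$ of characteristic zero. A finite poset $(\mathcal{P},\preceq)$ has underlying set $\{1,\dots,n\}$, labeled so that $x\preceq y$ implies $x\le y$ as integers. Write $x\prec y$ if $x\preceq y$ and $x\ne y$. $Ext(\mathcal{P})$ is the set of minimal and maximal elements of $\mathcal{P}$, and $Rel_E(\mathcal{P})$ is the set of strict relations $p\prec q$ with $p,q\in Ext(\mathcal{P})$. A strict relation $p\prec q$ is covering if there is no $z$ with $p\prec z\prec q$; $Rel_{\overline{C}}(\mathcal{P})$ is the set of non-covering strict relations. The nilpotent Lie poset algebra $\mathfrak{g}^{\prec}(\mathcal{P})$ is the Lie subalgebra of $\mathfrak{gl}(n,\mathbf{k})$ spanned by the matrix units $E_{i,j}$ with $i\prec j$, with bracket $[X,Y]=XY-YX$. The breadth of a Lie algebra $L$ is $b(L)=\max_{x\in L}\operatorname{rank}(\mathrm{ad}_x)$, where $\mathrm{ad}_x=[x,-]$. *)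

(* Defs.v *)
From HB Require Import structures.
From mathcomp Require Import all_boot all_order all_algebra.
From mathcomp Require Import boolp.
Set Implicit Arguments. Unset Strict Implicit. Unset Printing Implicit Defensive.
Import GRing.Theory.
Local Open Scope ring_scope.

(* A finite poset on 'I_n (the labels 0..n-1 play the role of 1..n),
   given by a relation [le], labelled naturally: x <= y in P implies x <= y. *)
Definition natural_poset (n : nat) (le : rel 'I_n) : Prop :=
  [/\ reflexive le, antisymmetric le, transitive le &
      forall x y : 'I_n, le x y -> (x <= y)%N].

Definition slt (n : nat) (le : rel 'I_n) (x y : 'I_n) : bool := le x y && (x != y).

Definition minimalb (n : nat) (le : rel 'I_n) (x : 'I_n) : bool :=
  [forall z, ~~ slt le z x].
Definition maximalb (n : nat) (le : rel 'I_n) (x : 'I_n) : bool :=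
  [forall z, ~~ slt le x z].
Definition extb (n : nat) (le : rel 'I_n) (x : 'I_n) : bool :=
  minimalb le x || maximalb le x.

Definition strict_rels (n : nat) (le : rel 'I_n) : {set 'I_n * 'I_n} :=
  [set pq | slt le pq.1 pq.2].
Definition rel_E (n : nat) (le : rel 'I_n) : {set 'I_n * 'I_n} :=
  [set pq | slt le pq.1 pq.2 && (extb le pq.1 && extb le pq.2)].
Definition rel_noncov (n : nat) (le : rel 'I_n) : {set 'I_n * 'I_n} :=
  [set pq | slt le pq.1 pq.2 && [exists z, slt le pq.1 z && slt le z pq.2]].

Definition lie_poset (F : fieldType) (n : nat) (le : rel 'I_n) : {vspace 'M[F]_n} :=
  <<[seq (delta_mx pq.1 pq.2 : 'M[F]_n) | pq <- enum (strict_rels le)]>>%VS.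

Definition ad (F : fieldType) (n : nat) (x : 'M[F]_n) : 'End('M[F]_n) :=
  linfun (fun y : 'M[F]_n => x *m y - y *m x).

Definition ad_rank (F : fieldType) (n : nat) (L : {vspace 'M[F]_n}) (x : 'M[F]_n) : nat :=
  \dim (ad x @: L)%VS.

(* breadth b(L) = max_{x in L} rank(ad_x); ranks are bounded by dim L *)
Definition breadth (F : fieldType) (n : nat) (L : {vspace 'M[F]_n}) : nat :=
  \max_(k < (\dim L).+1 | `[< exists2 x, x \in L & ad_rank L x = k >]) k.

(* Main.v *)
Require Import Defs.
From HB Require Import structures.
From mathcomp Require Import all_boot all_order all_algebra.
From mathcomp Require Import boolp zify.
Set Implicit Arguments. Unset Strict Implicit. Unset Printing Implicit Defensive.
Import GRing.Theory.
Local Open Scope ring_scope.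

Section Aux.
Variables (F : fieldType) (n : nat).
Local Notation M := 'M[F]_n.

Definition adf (x : M) (y : M) : M := x *m y - y *m x.
Fact adf_is_linear x : linear (adf x).
Proof.
move=> a u v; rewrite /adf mulmxDr mulmxDl -scalemxAr -scalemxAl.
by rewrite scalerBr opprD addrACA.
Qed.
HB.instance Definition _ x := GRing.isLinear.Build F M M *:%R (adf x) (adf_is_linear x).

Lemma adE (x y : M) : ad x y = x *m y - y *m x.
Proof. by have -> : ad x = linfun (adf x) by []; rewrite lfunE. Qed.

Lemma span_mul_sub (X Y : seq M) (V : {vspace M}) :
  {in X & Y, forall a b, a *m b \in V} ->
  forall x y, x \in <<X>>%VS -> y \in <<Y>>%VS -> x *m y \in V.
Proof.
move=> H x y hx hy.
rewrite (coord_span (X := in_tuple X) hx) (coord_span (X := in_tuple Y) hy).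
rewrite mulmx_suml; apply: memv_suml => i _.
rewrite -scalemxAl mulmx_sumr; apply: memvZ; apply: memv_suml => j _.
rewrite -scalemxAr; apply: memvZ; apply: H; apply: mem_nth; by [].
Qed.

Variables (le : rel 'I_n) (hP : natural_poset le).
Lemma inS pq : (pq \in strict_rels le) = slt le pq.1 pq.2.
Proof. by rewrite /strict_rels inE. Qed.
Lemma inEE pq : (pq \in rel_E le) = slt le pq.1 pq.2 && (extb le pq.1 && extb le pq.2).
Proof. by rewrite /rel_E inE. Qed.
Lemma inNC pq : (pq \in rel_noncov le) = slt le pq.1 pq.2 && [exists z, slt le pq.1 z && slt le z pq.2].
Proof. by rewrite /rel_noncov inE. Qed.

Definition dl (s : {set 'I_n * 'I_n}) : seq M :=
  [seq delta_mx pq.1 pq.2 | pq <- enum s].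

Lemma dl_mem (s : {set 'I_n * 'I_n}) (p q : 'I_n) : (p, q) \in s -> delta_mx p q \in dl s.
Proof. by move=> h; apply/mapP; exists (p, q); rewrite ?mem_enum. Qed.

Lemma slt_trans a b d : slt le a b -> slt le b d -> slt le a d.
Proof.
case: hP => _ hanti htr _.
rewrite /slt => /andP[hab nab] /andP[hbd nbd].
rewrite (htr _ _ _ hab hbd) /=; apply/eqP => ead.
move: hbd; rewrite -ead => hba.
by move/eqP: nab; apply; apply: hanti; rewrite hab hba.
Qed.

Lemma relE_max p q : (p, q) \in rel_E le -> forall z, ~~ slt le q z.
Proof.
rewrite inEE /= => /and3P[hs _ /orP[/forallP hmin|/forallP hmax]] z //.
by move: (hmin p); rewrite hs.
Qed.

Lemma relE_min p q : (p, q) \in rel_E le -> forall z, ~~ slt le z p.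
Proof.
rewrite inEE /= => /and3P[hs /orP[/forallP hmin|/forallP hmax] _] z //.
by move: (hmax q); rewrite hs.
Qed.

Lemma prodE_L : {in dl (rel_E le) & dl (strict_rels le),
  forall a b, a *m b \in (0%VS : {vspace M})}.
Proof.
move=> a b /mapP[[p q] Hpq ->] /mapP[[c d] Hcd ->] /=.
rewrite mem_enum in Hpq; rewrite mem_enum in Hcd; rewrite mul_delta_mx_cond.
case: eqP => [eqc|_]; last by rewrite mulr0n mem0v.
by move: Hcd (relE_max Hpq d); rewrite inS /= -eqc => ->.
Qed.

Lemma prodL_E : {in dl (strict_rels le) & dl (rel_E le),
  forall a b, a *m b \in (0%VS : {vspace M})}.
Proof.
move=> a b /mapP[[c d] Hcd ->] /mapP[[p q] Hpq ->] /=.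
rewrite mem_enum in Hpq; rewrite mem_enum in Hcd; rewrite mul_delta_mx_cond.
case: eqP => [eqc|_]; last by rewrite mulr0n mem0v.
by move: Hcd (relE_min Hpq c); rewrite inS /= eqc => ->.
Qed.

Lemma prodLL : {in dl (strict_rels le) & dl (strict_rels le),
  forall a b, a *m b \in <<dl (rel_noncov le)>>%VS}.
Proof.
move=> a b /mapP[[p q] Hpq ->] /mapP[[c d] Hcd ->] /=.
rewrite mem_enum inS in Hpq; rewrite mem_enum inS in Hcd; rewrite mul_delta_mx_cond.
case: eqP => [eqc|_]; last by rewrite mulr0n mem0v.
rewrite mulr1n; apply: memv_span; apply: dl_mem; rewrite inNC /=.
rewrite -eqc in Hcd; rewrite (slt_trans Hpq Hcd) /=.
by apply/existsP; exists q; rewrite Hpq Hcd.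
Qed.

Lemma rank_ii x : x \in lie_poset F le ->
  (ad_rank (lie_poset F le) x <= #|rel_noncov le|)%N.
Proof.
move=> xL; rewrite /ad_rank.
apply: (leq_trans (dimvS (_ : _ <= <<dl (rel_noncov le)>>)%VS)).
  rewrite /lie_poset limg_span; apply/span_subvP => v /mapP[b hb ->].
  rewrite adE; apply: memvB; apply: (span_mul_sub prodLL) => //;
    exact: memv_span.
by apply: (leq_trans (dim_span _)); rewrite size_map -cardE.
Qed.

Lemma rank_i x : x \in lie_poset F le ->
  (ad_rank (lie_poset F le) x <= #|strict_rels le :\: rel_E le| - 1)%N.
Proof.
move=> xL; rewrite /ad_rank.
set L := lie_poset F le.
set VE := <<dl (rel_E le)>>%VS.
set VN := <<dl (strict_rels le :\: rel_E le)>>%VS.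
have LE : (L <= VE + VN)%VS.
  apply/span_subvP => b /mapP[[p q] Hpq ->]; rewrite mem_enum in Hpq.
  case: (boolP ((p, q) \in rel_E le)) => h.
    by apply: (subvP (addvSl VE VN)); apply: memv_span; apply: dl_mem.
  apply: (subvP (addvSr VE VN)); apply: memv_span; apply: dl_mem.
  by rewrite in_setD h.
have killE : forall z, z \in L -> (VE <= lker (ad z))%VS.
  move=> z zL; apply/subvP => e eE; rewrite memv_ker adE.
  have h1 : z *m e \in (0%VS : {vspace M}) := span_mul_sub prodL_E zL eE.
  have h2 : e *m z \in (0%VS : {vspace M}) := span_mul_sub prodE_L eE zL.
  by rewrite memv0 in h1; rewrite memv0 in h2; rewrite (eqP h1) (eqP h2) subrr.
have imE : (ad x @: VE = 0)%VS by apply/eqP; rewrite -lkerE; exact: killE.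
have : x \in (VE + VN)%VS by apply: (subvP LE).
case/memv_addP => e eE [y yN xey].
case: (eqVneq y 0) => [y0|ny0].
  have xE : x \in VE by rewrite xey y0 addr0.
  have : (L <= lker (ad x))%VS.
    apply/subvP => b bL; rewrite memv_ker adE.
    have h1 : x *m b \in (0%VS : {vspace M}) := span_mul_sub prodE_L xE bL.
    have h2 : b *m x \in (0%VS : {vspace M}) := span_mul_sub prodL_E bL xE.
    by rewrite memv0 in h1; rewrite memv0 in h2; rewrite (eqP h1) (eqP h2) subrr.
  by rewrite lkerE => /eqP ->; rewrite dimv0.
have hle : (\dim (ad x @: L) <= \dim (ad x @: VN))%N.
  by apply: leq_trans (dimvS (limgS (ad x) LE)) _; rewrite limgD imE add0v.
have yK : y \in (VN :&: lker (ad x))%VS.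
  rewrite memv_cap yN memv_ker.
  have -> : y = x - e by rewrite xey addrC addKr.
  rewrite linearB /= adE subrr.
  by move/subvP: (killE x xL) => /(_ e eE); rewrite memv_ker => /eqP ->; rewrite subr0.
have pos : (0 < \dim (VN :&: lker (ad x)))%N.
  rewrite lt0n dimv_eq0; apply/negP => /eqP h; move: yK; rewrite h memv0.
  by rewrite (negPf ny0).
have := limg_ker_dim (ad x) VN.
have : (\dim VN <= #|strict_rels le :\: rel_E le|)%N.
  by apply: (leq_trans (dim_span _)); rewrite size_map -cardE.
move: hle pos; set a := \dim (ad x @: L); set b := \dim (ad x @: VN);
  set c := \dim (VN :&: lker (ad x)); set d := \dim VN.
move=> h1 h2 h3 h4.
move: h1 h2 h3 h4; clearbody a b c d; clear; lia.
Qed.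

End Aux.

Theorem proposition5 (F : closedFieldType) (hF : [pchar F]%R =i pred0)
    (n : nat) (le : rel 'I_n) (hP : natural_poset le) :
  (breadth (lie_poset F le) <= #|strict_rels le :\: rel_E le| - 1)%N /\
  (breadth (lie_poset F le) <= #|rel_noncov le|)%N.
Proof.
split; apply/bigmax_leqP => k /asboolP [x xL <-].
  exact: rank_i.
exact: rank_ii.
Qed.
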